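(* There exist infinitely many positive integers $n$ such that for each such $n$ there is a graph $G$ with exactly $\binom{2n}{2}$ edges with the property that for every bipartition $V_1,V_2$ of $V(G)$, $\max\{e(V_1),e(V_2)\}\ge \binom{n}{2}+\frac{5n}{48}$.
   Context: For a bipartition $V_1,V_2$ of $V(G)$, $e(V_i)$ denotes the number of edges of $G$ with both ends in $V_i$. *)

(* Defs.v *)
From mathcomp Require Import all_boot all_order all_algebra.
Set Implicit Arguments. Unset Strict Implicit. Unset Printing Implicit Defensive.

Definition simple_graph (T : finType) (e : rel T) : Prop :=
  symmetric e /\ irreflexive e.

Definition edges (T : finType) (e : rel T) : {set {set T}} :=
  [set E : {set T} | [exists x : T, exists y : T, (E == [set x; y]) && e x y]].

Definition e_in (T : finType) (e : rel T) (A : {set T}) : nat :=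
  #|[set E in edges e | E \subset A]|.

(* Main.v *)
From Stdlib Require Import ZArith Lia.
Require Import Defs.
From mathcomp Require Import all_boot all_order all_algebra zify.

Section G.
Variables (a t : nat).
Definition TT := ('I_a + 'I_t)%type.
Definition isl (x : TT) : bool := if x is inl _ then true else false.
Definition ee : rel TT := fun x y => (x != y) && (isl x == isl y).
Definition LL : {set TT} := [set x | isl x].

Lemma ee_simple : simple_graph ee.
Proof. split=> [x y|x]; rewrite /ee ?eqxx //. by rewrite [y == x]eq_sym [isl y == isl x]eq_sym. Qed.

Lemma edgesE E : (E \in edges ee) = (#|E| == 2) && ((E \subset LL) || (E \subset ~: LL)).
Proof.
rewrite inE; apply/existsP/idP.
- case=> x /existsP [y /andP [/eqP -> /andP [nxy /eqP hl]]].
  rewrite cards2 nxy /= !subUset !sub1set !inE hl.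
  by case: (isl y).
- case/andP => /cards2P [x [y [nxy ->]]].
  rewrite !subUset !sub1set !inE => h.
  exists x; apply/existsP; exists y; rewrite eqxx /ee nxy /=.
  by move: h; case: (isl x); case: (isl y).
Qed.

Lemma e_inE A : e_in ee A = 'C(#|A :&: LL|, 2) + 'C(#|A :&: ~: LL|, 2).
Proof.
rewrite /e_in -!cards_draws.
have -> : [set E in edges ee | E \subset A] =
  [set E : {set TT} | E \subset A :&: LL & #|E| == 2] :|: [set E : {set TT} | E \subset A :&: ~: LL & #|E| == 2].
  apply/setP => E; rewrite [in LHS]inE edgesE !inE !subsetI.
  by case: (E \subset A); case: (#|E| == 2); case: (E \subset LL); case: (E \subset ~: LL).
set S1 := [set E : {set TT} | E \subset A :&: LL & _].
set S2 := [set E : {set TT} | E \subset A :&: ~: LL & _].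
rewrite cardsU.
suff -> : S1 :&: S2 = set0 by rewrite cards0 subn0.
apply/setP => E; rewrite !inE !subsetI.
apply/negP => /andP [/andP [/andP [_ h1] /eqP h2] /andP [/andP [_ h3] _]].
have : E \subset LL :&: ~: LL by rewrite subsetI h1 h3.
rewrite setICr subset0 => /eqP h; by rewrite h cards0 in h2.
Qed.

Lemma cardLL : #|LL| = a.
Proof.
have -> : LL = [set inl i | i : 'I_a].
  apply/setP => x; rewrite !inE; case: x => [i|j] /=.
  by apply/esym/imsetP; exists i.
  by apply/esym/imsetP => -[i _].
by rewrite card_imset ?card_ord //; move=> i j [].
Qed.

Lemma cardLLC : #|~: LL| = t.
Proof.
have -> : ~: LL = [set inr i | i : 'I_t].
  apply/setP => x; rewrite !inE; case: x => [i|j] /=.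
  by apply/esym/imsetP => -[j _].
  by apply/esym/imsetP; exists j.
by rewrite card_imset ?card_ord //; move=> i j [].
Qed.

End G.
Section ZS.
Local Open Scope Z_scope.
Lemma coreZ (u v k : Z) : 5 <= k -> 1 <= u -> 1 <= v -> u + v = 4*k+2 ->
  24*(u*(u-1)) < 5*(4*k*k+3*k+1) -> 24*(v*(v-1)) + 48 < 53*(4*k*k+3*k+1) -> False.
Proof.
intros hk hu hv huv h1 h2.
assert (hs : 0 <= (3*(2*u-1) - (2*v-1))*(3*(2*u-1) - (2*v-1))) by nia.
assert (hq : (u+v)*(u+v) = (4*k+2)*(4*k+2)) by (rewrite huv; ring).
assert (hk2 : 5*k <= k*k) by nia.
nia.
Qed.
End ZS.


Lemma b2 m : 'C(m,2) * 2 = m * m.-1.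
Proof. by rewrite -[2]/(2`!) bin_ffact; case: m => [|m] //=; rewrite /falling_factorial /= ?muln1. Qed.

Lemma core k u v : 5 <= k -> u + v = 4*k+2 ->
  5*(4*k*k+3*k+1) <= 48 * 'C(u,2) \/ 53*(4*k*k+3*k+1) <= 48 * 'C(v,2) + 48.
Proof.
move=> hk huv.
case: (leqP (5*(4*k*k+3*k+1)) (48 * 'C(u,2))) => h1; [by left|right].
rewrite leqNgt; apply/negP => h2.
case: u huv h1 => [|u] huv h1.
  rewrite add0n in huv; subst v.
  have hv : 'C(4*k+2,2)*2 = (4*k+2)*(4*k+1) by rewrite b2 addn2 addn1.
  nia.
case: v huv h2 => [|v] huv h2.
  rewrite addn0 in huv; rewrite huv in h1.
  have hb : 'C(4*k+2,2)*2 = (4*k+2)*(4*k+1) by rewrite b2 addn2 addn1.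
  nia.
have hu := b2 u.+1; have hv := b2 v.+1; rewrite /= in hu hv.
apply: (coreZ (Z.of_nat u.+1) (Z.of_nat v.+1) (Z.of_nat k)); lia.
Qed.

Lemma arith k x x' y y' : 5 <= k -> x + x' = 2*(4*k*k+3*k+1) - 1 -> y + y' = 4*k+2 ->
  48 * 'C(4*k*k+3*k+1,2) + 5*(4*k*k+3*k+1) <=
  48 * maxn ('C(x,2) + 'C(y,2)) ('C(x',2) + 'C(y',2)).
Proof.
move=> hk hx hy.
set n := 4*k*k+3*k+1 in hx *.
have hnd : n = 4*k*k+3*k+1 by []. clearbody n.
have hn1 : 'C(n.+1,2) = 'C(n,2) + n by rewrite binS bin1.
have hn : 'C(n,2) = 'C(n-1,2) + (n-1).
  by rewrite -{1}(subnK (_ : 1 <= n)) ?addn1 ?binS ?bin1 //; lia.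
rewrite maxnMr leq_max.
case: (leqP (n.+1) x) => hx1.
  have := leq_bin2l 2 hx1; rewrite hn1 => h; apply/orP; left; lia.
case: (leqP (n.+1) x') => hx2.
  have := leq_bin2l 2 hx2; rewrite hn1 => h; apply/orP; right; lia.
have [ex|ex] : (x = n /\ x' = n-1) \/ (x = n-1 /\ x' = n) by lia.
- case: ex => -> ->; case: (core _ _ _ hk hy) => h; apply/orP; [left|right]; lia.
- case: ex => -> ->; rewrite addnC in hy; case: (core _ _ _ hk hy) => h; apply/orP; [right|left]; lia.
Qed.

Import Order.TTheory GRing.Theory Num.Theory.
Local Open Scope ring_scope.
Lemma ratfin (c n M : nat) : (48*c + 5*n <= 48*M)%N -> (c%:R + (5*n)%:R / 48%:R : rat) <= M%:R.
Proof.
move=> h.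
have h48 : (0 : rat) < 48%:R by rewrite ltr0n.
rewrite -(ler_pM2l h48) mulrDr mulrCA divff ?mulr1; last by rewrite pnatr_eq0.
by rewrite -!natrM -natrD ler_nat.
Qed.


Theorem theorem1p4 :
  forall N : nat, exists n : nat, (N < n)%N /\ (0 < n)%N /\
    exists (T : finType) (e : rel T),
      simple_graph e /\
      #|edges e| = 'C(2 * n, 2) /\
      forall V1 : {set T},
        ('C(n, 2)%:R + (5 * n)%:R / 48%:R : rat)
          <= (maxn (e_in e V1) (e_in e (~: V1)))%:R.
Proof.
move=> N; set k := (N + 5)%N.
have hk : (5 <= k)%N by rewrite /k; lia.
set n := (4*k*k+3*k+1)%N.
have hnd : n = (4*k*k+3*k+1)%N by []. clearbody n.
set a := (2*n - 1)%N. set t := (4*k+2)%N.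
have hta : 'C(t,2) = a.
  apply/eqP; rewrite -(eqn_pmul2r (_ : (0 < 2)%N)) // b2 /t /a hnd.
  rewrite addn2 /=; apply/eqP; lia.
have ha : 'C(2*n,2) = ('C(a,2) + a)%N.
  by rewrite (_ : (2*n = a.+1)%N) ?binS ?bin1 // /a hnd; lia.
exists n; split; first by rewrite hnd /k; nia.
split; first by rewrite hnd; lia.
exists (TT a t), (@ee a t); split; first exact: ee_simple.
split.
  have -> : edges (@ee a t) = [set E in edges (@ee a t) | E \subset setT].
    by apply/setP => E; rewrite [in RHS]inE subsetT andbT.
  by rewrite -/(e_in _ _) e_inE !setTI cardLL cardLLC hta ha.
move=> V1.
have hx : (#|V1 :&: LL a t| + #|~: V1 :&: LL a t| = 2*n - 1)%N.
  by have := cardsID V1 (LL a t); rewrite setDE cardLL !(setIC (LL a t)).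
have hy : (#|V1 :&: ~: LL a t| + #|~: V1 :&: ~: LL a t| = 4*k + 2)%N.
  by have := cardsID V1 (~: LL a t); rewrite setDE cardLLC !(setIC (~: LL a t)).
rewrite hnd in hx.
have := arith _ _ _ _ _ hk hx hy.
rewrite -hnd => h; apply: ratfin.
by rewrite !e_inE.
Qed.
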